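(* Let $\mathcal G_1$ and $\mathcal G_2$ be digraphs of two dynamic systems. Suppose $\mathcal G_2$ has a single input node $k_2^1$ and is structurally controllable; the structural controllability of $\mathcal G_1$ is unknown. Suppose there exists a directed path starting from some input node $k_1^1$ of $\mathcal G_1$ and ending at $k_2^1$. Form the graph consisting of: - the nodes of this path together with the nodes of $\mathcal G_2$; - the edges of the path together with the edges of $\mathcal G_2$; - a single input at the initial node $k_1^1$ of the path. Then this graph is structurally controllable.
   Context: A directed path is a sequence of edges where each edge's terminal node is the next edge's initial node, with no repeated nodes. For a digraph, $A=[a_{ij}]$ denotes the weight matrix, with $a_{ij}\ne 0$ iff there is an edge from $j$ to $i$; inputs at node $k$ correspond to columns $b\,\bm e_k$ of the input matrix $B$. A graph with designated input nodes is structurally controllable if there is a choice of nonzero values for its edge weights and input gains such that the resulting pair $(A,B)$ is controllable (equivalently, there is a controllable pair with the same zero/nonzero pattern as $(A,B)$). *)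

(* Defs.v *)
From HB Require Import structures.
From mathcomp Require Import all_boot all_order all_algebra.
From mathcomp Require Import reals.
Set Implicit Arguments. Unset Strict Implicit. Unset Printing Implicit Defensive.
Import Order.TTheory GRing.Theory Num.Theory.
Local Open Scope ring_scope.

Definition controllable (R : fieldType) (n m : nat)
    (A : 'M[R]_n) (B : 'M[R]_(n, m)) : bool :=
  \rank (\mxrow_(k < n) (A ^+ k *m B)) == n.

(* Nodes are indexed by [enum_val : 'I_#|T| -> T]; input
   columns by [enum_val : 'I_#|I| -> T].  a_ij <> 0 iff edge j -> i; the k-th
   column of B is b e_(node k) with b <> 0.  Weights are real numbers. *)
Definition struct_controllable (R : realType) (T : finType) (e : rel T)
    (I : {set T}) : Prop :=
  exists (A : 'M[R]_#|T|) (B : 'M[R]_(#|T|, #|I|)),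
    [/\ forall i j : 'I_#|T|, (A i j != 0) = e (enum_val j) (enum_val i),
        forall (i : 'I_#|T|) (k : 'I_#|I|),
          (B i k != 0) = (enum_val i == enum_val k)
      & controllable A B].

Definition struct_controllable_on (R : realType) (V : finType) (N : {set V})
    (E : rel V) (I : {set V}) : Prop :=
  @struct_controllable R {x : V | x \in N}
    (fun x y => E (val x) (val y)) [set x | val x \in I].

Definition path_edge (V : eqType) (s : seq V) : rel V :=
  fun x y => (x, y) \in zip s (behead s).

(* Main.v *)
From HB Require Import structures.
From mathcomp Require Import all_boot all_order all_algebra.
From mathcomp Require Import reals.
From mathcomp Require Import zify.
Set Implicit Arguments. Unset Strict Implicit. Unset Printing Implicit Defensive.
Import Order.TTheory GRing.Theory Num.Theory.
Local Open Scope ring_scope.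
Require Import Defs.

Lemma intertw_exp (F : fieldType) n m2 (A' : 'M[F]_n) (A2' : 'M[F]_m2) (P : 'M[F]_(m2,n)) j :
  P *m A' = A2' *m P -> P *m A' ^+ j = A2' ^+ j *m P.
Proof.
move=> H; elim: j => [|j IH]; first by rewrite !expr0 mulmx1 mul1mx.
by rewrite !exprSr mulmxA IH -!mulmxA H.
Qed.

Lemma core (F : fieldType) n m2 (A' : 'M[F]_n) (A2' : 'M[F]_m2) (P : 'M[F]_(m2,n))
   (e1 : 'rV_n) (e2 : 'rV_m2) (L : nat) :
  (1%:M <= \sum_(j < m2) <<e2 *m A2' ^+ j>>)%MS ->
  P *m A' = A2' *m P ->
  e1 *m A' ^+ L = e2 *m P ->
  (L + m2 <= n)%N ->
  (forall i : 'I_n, ((delta_mx 0 i : 'rV[F]_n) <= P)%MS \/ exists2 t, (t < L)%N & (delta_mx 0 i : 'rV[F]_n) = e1 *m A'^+t) ->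
  (1%:M <= \sum_(k < n) <<e1 *m A' ^+ k>>)%MS.
Proof.
move=> H1 HP HL Hn H; apply/row_subP => i; rewrite row1.
case: (H i) => [sP | [t tL ->]].
  apply: submx_trans sP _.
  rewrite -[P]mul1mx; apply: submx_trans (submxMr P H1) _.
  rewrite sumsmxMr_gen; apply/sumsmx_subP => j _; rewrite genmxE (eqmxMr P (genmxE _)).
  have -> : e2 *m A2'^+j *m P = e1 *m A'^+(L+j).
    by rewrite exprD -mulmxE mulmxA HL -!mulmxA (intertw_exp _ HP).
  have ltn : (L + j < n)%N by apply: leq_trans Hn; rewrite ltn_add2l.
  by apply: (sumsmx_sup (Ordinal ltn)) => //; rewrite genmxE.
have ltn : (t < n)%N by apply: leq_trans (leq_trans tL (leq_addr _ _)) Hn.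
by apply: (sumsmx_sup (Ordinal ltn)) => //; rewrite genmxE.
Qed.

Lemma ctrlE (F : fieldType) n m (A : 'M[F]_n) (B : 'M[F]_(n, m)) :
  controllable A B = (1%:M <= \sum_(k < n) <<(A ^+ k *m B)^T>>)%MS.
Proof.
by rewrite /controllable -mxrank_tr tr_mxrow (eqmx_col _) sub1mx.
Qed.

Section Idx.
Variables (V : finType) (S : {set V}) (d : {x : V | x \in S}).
Definition idx (x : V) : 'I_#|{: {x : V | x \in S}}| := enum_rank (insubd d x).
Lemma idxK x : x \in S -> val (enum_val (idx x)) = x.
Proof. by move=> xS; rewrite /idx enum_rankK insubdK. Qed.
Lemma eq_idx (l : 'I_#|{: {x : V | x \in S}}|) x : x \in S ->
  (val (enum_val l) == x) = (l == idx x).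
Proof.
move=> xS; rewrite -{1}(idxK xS) val_eqE.
by rewrite (inj_eq (@enum_val_inj _ _)).
Qed.
Lemma idx_val (l : 'I_#|{: {x : V | x \in S}}|) : idx (val (enum_val l)) = l.
Proof. by apply/eqP; rewrite eq_sym -eq_idx ?(valP (enum_val l)). Qed.
End Idx.

Section PathEdge.
Variable V : eqType.
Lemma pe_cons (a b : V) s x y :
  path_edge [:: a, b & s] x y = ((x, y) == (a, b)) || path_edge (b :: s) x y.
Proof. by rewrite /path_edge /= in_cons. Qed.

Lemma pe_nth (s : seq V) x y x0 : path_edge s x y ->
  exists2 t, (t.+1 < size s)%N & x = nth x0 s t /\ y = nth x0 s t.+1.
Proof.
elim: s => [|a [|b s] IH] //.
rewrite pe_cons => /orP[/eqP [-> ->] | /IH [t ht [-> ->]]].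
  by exists 0%N.
by exists t.+1.
Qed.

Lemma pe_nth_mem (s : seq V) x0 t : (t.+1 < size s)%N ->
  path_edge s (nth x0 s t) (nth x0 s t.+1).
Proof.
elim: s t => [|a [|b s] IH] // [|t] ht; rewrite pe_cons ?eqxx //.
by rewrite IH ?orbT.
Qed.

Lemma pe_nthE (s : seq V) x0 t w : uniq s -> (t.+1 < size s)%N ->
  path_edge s (nth x0 s t) w = (w == nth x0 s t.+1).
Proof.
move=> us ht; apply/idP/eqP => [| ->]; last exact: pe_nth_mem.
case/(pe_nth x0) => t' ht' [e1 ->].
have : nth x0 s t == nth x0 s t' by rewrite e1.
by rewrite nth_uniq // ?(ltnW ht) ?(ltnW ht') // => /eqP ->.
Qed.
End PathEdge.

Lemma trmxX (F : fieldType) n (A : 'M[F]_n) k : (A ^+ k)^T = A^T ^+ k.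
Proof.
elim: k => [|k IH]; first by rewrite !expr0 trmx1.
by rewrite exprS exprSr -!mulmxE trmx_mul IH.
Qed.

Theorem theorem5 (R : realType) (V : finType) (E : rel V)
    (N1 : {set V}) (E1 : rel V) (I1 : {set V})
    (N2 : {set V}) (E2 : rel V) (k2 : V)
    (k1 : V) (p : seq V) :
  I1 \subset N1 ->
  k2 \in N2 ->
  struct_controllable_on R N2 E2 [set k2] ->
  k1 \in I1 ->
  path E k1 p ->
  uniq (k1 :: p) ->
  last k1 p = k2 ->
  (forall x, x \in k1 :: p -> x \in N2 -> x = k2) ->
  struct_controllable_on R ([set x in k1 :: p] :|: N2)
    (fun x y => path_edge (k1 :: p) x y || [&& E2 x y, x \in N2 & y \in N2])
    [set k1].
Proof.
move=> _ Hk2 [A2 [B2 [hA2 hB2 hc2]]] _ _ us Hlast Hs2.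
set s := k1 :: p in us Hs2 *.
set S := [set x in s] :|: N2.
have sN2 : forall x, x \in N2 -> x \in S by move=> x xN; rewrite in_setU xN orbT.
have sS : forall x, x \in s -> x \in S by move=> x xs; rewrite in_setU in_set xs.
have k1S : k1 \in S by apply: sS; rewrite mem_head.
pose dS : {x : V | x \in S} := exist _ k1 k1S.
pose d2 : {x : V | x \in N2} := exist _ k2 Hk2.
pose id1 := idx dS. pose id2 := idx d2.
pose L := size p.
have sizes : size s = L.+1 by [].
have nthL : nth k1 s L = k2 by rewrite -Hlast (nth_last k1 s).
have noN2 : forall t, (t < L)%N -> nth k1 s t \notin N2.
  move=> t ht; apply/negP => h.
  have ts : (t < size s)%N by rewrite sizes ltnS ltnW.
  have := Hs2 _ (mem_nth k1 ts) h; rewrite -nthL => /eqP.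
  by rewrite nth_uniq // ?sizes // => /eqP e; rewrite e ltnn in ht.
have noedge : forall x y, path_edge s x y -> x \in N2 -> False.
  move=> x y /(pe_nth k1) [t ht [ex _]]; rewrite ex.
  by apply/negP/noN2; rewrite -ltnS -sizes.
rewrite /struct_controllable_on /struct_controllable.
pose A : 'M[R]_#|{: {x : V | x \in S}}| := \matrix_(i, j)
  ((if (val (enum_val i) \in N2) && (val (enum_val j) \in N2)
    then A2 (id2 (val (enum_val i))) (id2 (val (enum_val j))) else 0)
   + (path_edge s (val (enum_val j)) (val (enum_val i)))%:R).
set I := [set x : {x : V | x \in S} | val x \in [set k1]].
pose B : 'M[R]_(#|{: {x : V | x \in S}}|, #|I|) :=
  \matrix_(i, c) (enum_val i == enum_val c)%:R.
exists A, B; split.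
- move=> i j; rewrite mxE /=.
  case: ifP => [/andP[hi hj] | hn].
    have -> : path_edge s (val (enum_val j)) (val (enum_val i)) = false.
      by apply/negP => /noedge; apply.
    by rewrite addr0 hA2 !idxK // hi hj /= andbT.
  rewrite add0r.
  have -> : [&& E2 (val (enum_val j)) (val (enum_val i)),
     val (enum_val j) \in N2 & val (enum_val i) \in N2] = false.
    by apply/negbTE; apply/and3P => [[_ h1 h2]]; rewrite h2 h1 in hn.
  by rewrite orbF; case: path_edge; rewrite ?oner_eq0 ?eqxx.
- by move=> i c; rewrite mxE; case: (enum_val i == enum_val c); rewrite ?oner_eq0 ?eqxx.
rewrite ctrlE.
pose e1 : 'rV[R]_#|{: {x : V | x \in S}}| := delta_mx 0 (id1 k1).
pose e2 : 'rV[R]_#|{: {x : V | x \in N2}}| := delta_mx 0 (id2 k2).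
pose P : 'M[R]_(#|{: {x : V | x \in N2}}|, #|{: {x : V | x \in S}}|) :=
  \matrix_(j, i) (val (enum_val i) == val (enum_val j))%:R.
have hdS : dS \in I by rewrite inE /= in_set1.
pose c0 := enum_rank_in hdS dS.
have colB : forall c, row c B^T = e1.
  move=> c; apply/rowP => j; rewrite !mxE /=.
  have := enum_valP c; rewrite inE in_set1 => /eqP hc.
  by rewrite -val_eqE hc (eq_idx dS).
apply: submx_trans (_ : (1%:M <= \sum_(k < _) <<e1 *m A^T ^+ k>>)%MS) _; last first.
  apply: sumsmxS => k _; rewrite !genmxE; apply: (eq_row_sub c0).
  by rewrite trmx_mul row_mul colB trmxX.
have step : forall t, (t < L)%N ->
    (delta_mx 0 (id1 (nth k1 s t)) : 'rV[R]_#|{: {x : V | x \in S}}|) *m A^T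
    = delta_mx 0 (id1 (nth k1 s t.+1)).
  move=> t ht; rewrite -rowE; apply/rowP => j; rewrite !mxE.
  have ts : (t < size s)%N by rewrite sizes ltnS ltnW.
  have t1s : (t.+1 < size s)%N by rewrite sizes ltnS.
  rewrite idxK ?sS ?mem_nth // (negbTE (noN2 t ht)) andbF add0r.
  by rewrite pe_nthE // (eq_idx dS) ?sS ?mem_nth.
have chain : forall t, (t <= L)%N ->
    e1 *m A^T ^+ t = delta_mx 0 (id1 (nth k1 s t)).
  elim=> [|t IH] ht; first by rewrite expr0 mulmx1.
  by rewrite exprSr -mulmxE mulmxA IH ?(ltnW ht) // step.
apply: (core (A2' := A2^T) (P := P) (e2 := e2) (L := L)).
- rewrite ctrlE in hc2; apply: submx_trans hc2 _.
  apply: sumsmxS => j _; rewrite !genmxE; apply/row_subP => c.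
  rewrite trmx_mul row_mul trmxX.
  have -> : row c B2^T = B2 (id2 k2) c *: e2.
    apply/rowP => i; rewrite !mxE /=.
    have := enum_valP c; rewrite inE in_set1 => /eqP hc.
    case: (eqVneq i (id2 k2)) => [-> | ne]; first by rewrite mulr1.
    rewrite mulr0; apply/eqP; rewrite -[_ == 0]negbK hB2 -val_eqE hc.
    by rewrite (eq_idx d2) // (negbTE ne).
  by rewrite -scalemxAl; apply: scalemx_sub; exact: submx_refl.
- apply/matrixP => j i; rewrite !mxE.
  set w := val (enum_val j); set vi := val (enum_val i).
  have wN : w \in N2 by exact: (valP (enum_val j)).
  rewrite (bigD1 (id1 w)) //= big1 ?addr0; last first.
    by move=> l /negbTE hl; rewrite !mxE (eq_idx dS) ?sN2 // hl mul0r.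
  rewrite !mxE idxK ?sN2 // eqxx mul1r.
  have -> : path_edge s w vi = false by apply/negP => /noedge; apply.
  rewrite addr0 wN andbT /id2 /w idx_val -/w.
  case: (boolP (vi \in N2)) => hi.
    rewrite (bigD1 (id2 vi)) //= big1 ?addr0; last first.
      by move=> l /negbTE hl; rewrite !mxE eq_sym (eq_idx d2) // hl mulr0.
    by rewrite !mxE idxK // eqxx mulr1.
  rewrite big1 // => l _; rewrite !mxE.
  have : val (enum_val l) \in N2 by exact: (valP (enum_val l)).
  case: eqP => [<-|]; first by rewrite (negbTE hi).
  by rewrite mulr0.
- rewrite chain // nthL -rowE; apply/rowP => i; rewrite !mxE /=.
  by rewrite idxK // (eq_idx dS) ?sN2.
- rewrite !card_sig.
  have eS : #|[pred x | x \in S]| = #|S| by apply: eq_card.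
  have eN : #|[pred x | x \in N2]| = #|N2| by apply: eq_card.
  rewrite eS eN.
  have h1 : #|[set x in s]| = L.+1 by rewrite cardsE (card_uniqP us).
  have h2 : (#|[set x in s] :&: N2| <= 1)%N.
    rewrite -(cards1 k2); apply: subset_leq_card; apply/subsetP => x.
    by rewrite in_setI in_set => /andP[xs xN]; rewrite (Hs2 x xs xN) in_set1.
  have := cardsU [set x in s] N2; rewrite -/S h1.
  move: h2; set a := #|_ :&: _|; set b := #|S|; set c := #|N2|.
  move=> h2 e; lia.
- move=> i; set vi := val (enum_val i).
  have viS : vi \in S by exact: (valP (enum_val i)).
  case: (boolP (vi \in N2)) => hi.
    left; apply: (eq_row_sub (id2 vi)); apply/rowP => l; rewrite !mxE /=.
    by rewrite idxK // (eq_idx dS) ?sN2 // /id1 /vi idx_val.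
  right.
  have vis : vi \in s by move: viS; rewrite in_setU in_set (negbTE hi) orbF.
  have hle : (index vi s <= L)%N by rewrite -ltnS -sizes index_mem.
  exists (index vi s); last by rewrite chain // nth_index // /id1 /vi idx_val.
  have : (index vi s < L.+1)%N by rewrite -sizes index_mem.
  rewrite ltnS leq_eqVlt => /orP [/eqP e|//].
  have := nth_index k1 vis; rewrite e nthL => e'.
  by rewrite -e' Hk2 in hi.
Qed.
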